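(* Let $\mathcal X$ be finite with $N=|\mathcal X|\ge2$, $c\in(0,1/N]$ and $0\le\varepsilon\le-\log c$. Then $$\Gamma_{\max}(\varepsilon,c)\le(1-Nc)e^\varepsilon+1\quad\text{and}\quad\Gamma_{\min}(\varepsilon,c)\ge\big((1-Nc)e^\varepsilon+1\big)^{-1}.$$
   Context: A kernel $K$ is a row-stochastic matrix with entries $K_{Y|X=x}(y)$, $(K\circ P_X)(y)=\sum_xK_{Y|X=x}(y)P_X(x)$. PML: $\ell_{K\times P_X}(X\to y)=\log\frac{\max_x K_{Y|X=x}(y)}{(K\circ P_X)(y)}$ for full-support $P_X$ and $(K\circ P_X)(y)>0$. $\mathcal Q_{\mathcal X}(c)=\{P_X:\min_xP_X(x)\ge c\}$; $C(K,\mathcal P)=\sup_{P_X\in\mathcal P}\sup_{y:(K\circ P_X)(y)>0}\ell_{K\times P_X}(X\to y)$; $\mathcal M(\varepsilon,c)$ is the set of kernels from $\mathcal X$ to a finite output set with $C(K,\mathcal Q_{\mathcal X}(c))\le\varepsilon$. Define $\Gamma_{\max}(\varepsilon,c)=\sup_{P_X,Q_X\in\mathcal Q_{\mathcal X}(c)}\sup_{K\in\mathcal M(\varepsilon,c)}\sup_{y}\frac{(K\circ P_X)(y)}{(K\circ Q_X)(y)}$ and $\Gamma_{\min}(\varepsilon,c)=\inf_{P_X,Q_X\in\mathcal Q_{\mathcal X}(c)}\inf_{K\in\mathcal M(\varepsilon,c)}\inf_{y}\frac{(K\circ P_X)(y)}{(K\circ Q_X)(y)}$, where $y$ ranges over outputs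 with $K_{Y|X=x}(y)>0$ for some $x$. *)

(* Defs.v *)
From HB Require Import structures.
From mathcomp Require Import all_boot all_order all_algebra.
From mathcomp Require Import all_classical all_reals all_analysis.
Set Implicit Arguments. Unset Strict Implicit. Unset Printing Implicit Defensive.
Import Order.TTheory GRing.Theory Num.Theory.
Local Open Scope ring_scope.
Local Open Scope classical_set_scope.

Section PML.
Variable R : realType.

(* A kernel from X to Y: row-stochastic matrix, K x y = K_{Y|X=x}(y). *)
Definition is_kernel (X Y : finType) (K : X -> Y -> R) : Prop :=
  (forall x y, 0 <= K x y) /\ (forall x, \sum_(y : Y) K x y = 1).

Definition is_dist (X : finType) (P : X -> R) : Prop :=
  (forall x, 0 <= P x) /\ \sum_(x : X) P x = 1.

Definition inQ (X : finType) (c : R) (P : X -> R) : Prop :=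
  is_dist P /\ (forall x, c <= P x).

Definition push (X Y : finType) (K : X -> Y -> R) (P : X -> R) (y : Y) : R :=
  \sum_(x : X) K x y * P x.

Definition pml (X Y : finType) (K : X -> Y -> R) (P : X -> R) (y : Y) : R :=
  ln ((\big[Num.max/0]_(x : X) K x y) / push K P y).

Definition Ccap (X Y : finType) (K : X -> Y -> R) (c : R) : \bar R :=
  ereal_sup [set r : \bar R | exists (P : X -> R) (y : Y),
    [/\ inQ c P, 0 < push K P y & r = (pml K P y)%:E]].

Definition inM (X Y : finType) (eps c : R) (K : X -> Y -> R) : Prop :=
  is_kernel K /\ (Ccap K c <= eps%:E)%E.

Definition ratios (X : finType) (eps c : R) : set (\bar R) :=
  [set r | exists (P Q : X -> R) (Y : finType) (K : X -> Y -> R) (y : Y),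
     [/\ inQ c P, inQ c Q, inM eps c K, (exists x, 0 < K x y) &
         r = (push K P y / push K Q y)%:E]].

Definition GammaMax (X : finType) (eps c : R) : \bar R := ereal_sup (ratios X eps c).
Definition GammaMin (X : finType) (eps c : R) : \bar R := ereal_inf (ratios X eps c).

End PML.

(* Main.v *)
Require Import Defs.
From HB Require Import structures.
From mathcomp Require Import all_boot all_order all_algebra.
From mathcomp Require Import all_classical all_reals all_analysis.
From mathcomp Require Import lra.
Import Order.TTheory GRing.Theory Num.Theory.
Local Open Scope ring_scope.

Section Aux.
Variable R : realType.

Lemma push_bounds (X Y : finType) (K : X -> Y -> R) (P : X -> R) (c : R) (y : Y) :
  is_kernel K -> inQ c P ->
  c * (\sum_x K x y) <= push K P y /\
  push K P y <= c * (\sum_x K x y) + (1 - #|X|%:R * c) * \big[Num.max/0]_x K x y.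
Proof.
move=> [K0 _] [[P0 P1] Pc].
have E : push K P y = c * (\sum_x K x y) + \sum_x K x y * (P x - c).
  rewrite /push mulr_sumr -big_split /=; apply: eq_bigr => x _.
  by rewrite mulrBr (mulrC c) addrC subrK.
rewrite E; split.
  rewrite lerDl; apply: sumr_ge0 => x _; apply: mulr_ge0 => //.
  by rewrite subr_ge0.
rewrite lerD2l.
have -> : 1 - #|X|%:R * c = \sum_x (P x - c).
  by rewrite sumrB P1 sumr_const mulr_natl.
rewrite mulr_suml; apply: ler_sum => x _.
rewrite mulrC; apply: ler_wpM2l; first by rewrite subr_ge0.
exact: le_bigmax.
Qed.

Lemma key (X Y : finType) (K : X -> Y -> R) (P Q : X -> R) (c eps : R) (y : Y) :
  0 < c -> c <= 1 / #|X|%:R ->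
  inQ c P -> inQ c Q -> inM eps c K -> (exists x, 0 < K x y) ->
  0 < push K Q y /\
  push K P y <= ((1 - #|X|%:R * c) * expR eps + 1) * push K Q y.
Proof.
move=> c0 cN HP HQ [HK HC] [x0 Kx0].
have [K0 _] := HK.
have [[Q0 _] Qc] := HQ.
set m := \big[Num.max/0]_x K x y.
have mpos : 0 < m by apply: lt_le_trans Kx0 (le_bigmax _ _ _).
have Qpos : 0 < push K Q y.
  rewrite /push (bigD1 x0) //=.
  have h1 : 0 < K x0 y * Q x0 by apply: mulr_gt0 => //; apply: lt_le_trans c0 (Qc x0).
  have h2 : 0 <= \sum_(i | i != x0) K i y * Q i.
    by apply: sumr_ge0 => x _; exact: mulr_ge0.
  lra.
split => //.
have hm : m <= expR eps * push K Q y.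
  have h : ((pml K Q y)%:E <= Ccap K c)%E.
    by apply: ereal_sup_ubound; exists Q, y; split.
  have h' : pml K Q y <= eps by rewrite -lee_fin (le_trans h HC).
  have hq : 0 < m / push K Q y by apply: divr_gt0.
  rewrite -ler_pdivrMr // -(lnK hq); rewrite ler_expR; exact: h'.
have [_ hP] := @push_bounds _ _ K _ c y HK HP.
have [hQ _] := @push_bounds _ _ K _ c y HK HQ.
have Npos : 0 < #|X|%:R :> R.
  by rewrite ltr0n; apply/card_gt0P; exists x0.
have t0 : 0 <= 1 - #|X|%:R * c.
  rewrite subr_ge0 -ler_pdivlMl //; by rewrite mulr1 -div1r.
have := ler_wpM2l t0 hm.
rewrite -/m in hP.
nra.
Qed.
End Aux.

Theorem proposition2 (R : realType) (X : finType) (c eps : R) :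
  (2 <= #|X|)%N -> 0 < c -> c <= 1 / #|X|%:R ->
  0 <= eps -> eps <= - ln c ->
  (GammaMax X eps c <= ((1 - #|X|%:R * c) * expR eps + 1)%:E)%E /\
  (((1 - #|X|%:R * c) * expR eps + 1)^-1%:E <= GammaMin X eps c)%E.
Proof.
move=> N2 c0 cN _ _.
have Npos : 0 < #|X|%:R :> R by rewrite ltr0n; apply: leq_trans N2.
have t0 : 0 <= 1 - #|X|%:R * c.
  rewrite subr_ge0 -ler_pdivlMl //; by rewrite mulr1 -div1r.
have Bpos : 0 < (1 - #|X|%:R * c) * expR eps + 1.
  by apply: ltr_wpDl => //; apply: mulr_ge0 => //; exact: ltW (expR_gt0 _).
split.
  apply: ge_ereal_sup => _ [P [Q [Y [K [y [HP HQ HK Hx ->]]]]]].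
  have [Qp H] := @key R X Y K P Q c eps y c0 cN HP HQ HK Hx.
  by rewrite lee_fin ler_pdivrMr.
apply: le_ereal_inf_tmp => _ [P [Q [Y [K [y [HP HQ HK Hx ->]]]]]].
have [Qp _] := @key R X Y K P Q c eps y c0 cN HP HQ HK Hx.
have [Pp H] := @key R X Y K Q P c eps y c0 cN HQ HP HK Hx.
rewrite lee_fin ler_pdivlMr // mulrC ler_pdivrMr // mulrC.
exact: H.
Qed.
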